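(* Let $n\ge2$, $\boldsymbol\sigma\in\{+,-\}^n$, $0\le s<t<1$, and let $\mathcal A:\mathbb Z_L^n\to\mathbb C$. Then $$\|\mathcal U_{s,t,\boldsymbol\sigma}\circ\mathcal A\|_{\max}\prec\|\mathcal A\|_{\max}\cdot(\eta_s/\eta_t)^n.$$
   Context: Fix $|E|<2$; $m=\lim_{\varepsilon\downarrow0}m_{sc}(E+i\varepsilon)$ ($m_{sc}$ the semicircle Stieltjes transform), $m(+)=m$, $m(-)=\bar m$, $\eta_t=(1-t)\operatorname{Im}m$. $S^{(B)}$ is the $L\times L$ matrix $S^{(B)}_{ab}=\frac13\mathbf 1(a-b\in\{-1,0,1\}\bmod L)$. For $m_i=m(\sigma_i)$ with the convention $\sigma_{n+1}=\sigma_1$, $(\mathcal U_{s,t,\boldsymbol\sigma}\circ\mathcal A)_{\mathbf a}=\sum_{\mathbf b\in\mathbb Z_L^n}\prod_{i=1}^n\Big(\frac{1-s\,m_im_{i+1}S^{(B)}}{1-t\,m_im_{i+1}S^{(B)}}\Big)_{a_ib_i}\mathcal A_{\mathbf b}$. $\|\mathcal A\|_{\max}=\max_{\mathbf a}|\mathcal A_{\mathbf a}|$. For deterministic quantities, $\xi\prec\zeta$ means $\xi\le N^\epsilon\zeta$ for all $\epsilon>0$ and large $N$, where $L$, $W$ depend on $N$. *)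

(* Defs.v *)
From HB Require Import structures.
From mathcomp Require Import all_boot all_order all_algebra.
From mathcomp Require Import all_classical all_reals all_analysis.
From mathcomp Require Import complex.
Set Implicit Arguments. Unset Strict Implicit. Unset Printing Implicit Defensive.
Import Order.TTheory GRing.Theory Num.Theory.
Local Open Scope ring_scope.
Local Open Scope complex_scope.

Section Defs.
Variable R : realType.
Local Notation C := R[i].

Definition cabs (z : C) : R :=
  let: a +i* b := z in Num.sqrt (a ^+ 2 + b ^+ 2).

Definition cim (z : C) : R := let: _ +i* b := z in b.

(* Boundary value m = lim_{eps -> 0+} m_sc(E + i eps) of the Stieltjes
   transform of the semicircle law, for |E| < 2:
   m_sc(z) = (-z + sqrt(z^2 - 4))/2, branch with Im m_sc > 0, giving
   m = (-E + i sqrt(4 - E^2)) / 2. *)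
Definition msc_bd (E : R) : C :=
  (- E / 2) +i* (Num.sqrt (4 - E ^+ 2) / 2).

(* m(+) = m, m(-) = conj m ; sign encoded as bool (true = +) *)
Definition msig (E : R) (sg : bool) : C :=
  if sg then msc_bd E else let: a +i* b := msc_bd E in a +i* (- b).

Definition eta_t (E t : R) : R := (1 - t) * cim (msc_bd E).

Definition SB (L : nat) : 'M[C]_L :=
  \matrix_(a < L, b < L)
    (if [|| ((a + 1) %% L == b)%N, (a == b :> nat) | ((b + 1) %% L == a)%N]
     then 3%:R^-1 else 0).

Definition Ufactor (L : nat) (s t : R) (x : C) : 'M[C]_L :=
  (1%:M - (s%:C * x) *: SB L) *m invmx (1%:M - (t%:C * x) *: SB L).

(* (U_{s,t,sigma} o A)_a, indices a in Z_L^n encoded as {ffun 'I_n -> 'I_L},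
   sigma_{n+1} = sigma_1 via the cyclic successor ordS *)
Definition Uop (E : R) (L n : nat) (s t : R) (sigma : 'I_n -> bool)
    (A : {ffun 'I_n -> 'I_L} -> C) (a : {ffun 'I_n -> 'I_L}) : C :=
  \sum_(b : {ffun 'I_n -> 'I_L})
     (\prod_(i < n)
        Ufactor L s t (msig E (sigma i) * msig E (sigma (ordS i))) (a i) (b i))
     * A b.

Definition maxnorm (L n : nat) (A : {ffun 'I_n -> 'I_L} -> C) : R :=
  \big[Num.max/0]_(a : {ffun 'I_n -> 'I_L}) cabs (A a).

End Defs.

(* Main.v *)
Require Import Defs.
From HB Require Import structures.
From mathcomp Require Import all_boot all_order all_algebra.
From mathcomp Require Import all_classical all_reals all_analysis.
From mathcomp Require Import complex.
From mathcomp Require Import lra ring.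
Import Order.TTheory GRing.Theory Num.Theory.
Local Open Scope ring_scope.

Lemma cabsE (R : realType) (z : R[i]) : `|z| = (cabs z)%:C%C.
Proof. by case: z. Qed.

Lemma cabs_ge0 (R : realType) (z : R[i]) : 0 <= cabs z.
Proof. have := normr_ge0 z; rewrite cabsE -(rmorph0 (real_complex R)) lecR //. Qed.

Lemma cabsD (R : realType) (x y : R[i]) : cabs (x + y) <= cabs x + cabs y.
Proof. have := ler_normD x y; rewrite !cabsE -rmorphD lecR //. Qed.

Lemma cabsM (R : realType) (x y : R[i]) : cabs (x * y) = cabs x * cabs y.
Proof. apply: (@complexI R); rewrite rmorphM /= -!cabsE normrM //. Qed.

Lemma cabsN (R : realType) (x : R[i]) : cabs (- x) = cabs x.
Proof. apply: (@complexI R); rewrite -!cabsE normrN //. Qed.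

Lemma cabs_sum (R : realType) (I : finType) (F : I -> R[i]) :
  cabs (\sum_i F i) <= \sum_i cabs (F i).
Proof.
have := ler_norm_sum (index_enum I) F xpredT.
rewrite cabsE.
under [X in _ <= X -> _]eq_bigr do rewrite cabsE.
by rewrite -rmorph_sum lecR.
Qed.

Lemma cabs_prod (R : realType) (n : nat) (F : 'I_n -> R[i]) :
  cabs (\prod_i F i) = \prod_i cabs (F i).
Proof.
apply: (@complexI R); rewrite rmorph_prod /= -cabsE normr_prod.
by apply: eq_bigr => i _; rewrite cabsE.
Qed.

Lemma cabsR (R : realType) (r : R) : cabs r%:C%C = `|r|.
Proof. by rewrite /cabs /= expr0n /= addr0 sqrtr_sqr. Qed.


Lemma sum_ind (R : realType) (L : nat) (c : 'I_L) :
  \sum_(b : 'I_L) ((b == c)%:R : R) = 1.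
Proof.
rewrite (bigD1 c) //= eqxx big1 ?addr0 // => b /negbTE -> //.
Qed.

Lemma cabs_inv3 (R : realType) : cabs ((3%:R : R[i])^-1) = 3^-1.
Proof.
have -> : (3%:R : R[i])^-1 = (3^-1 : R)%:C%C.
  by rewrite fmorphV /= rmorphMn.
by rewrite cabsR ger0_norm // invr_ge0.
Qed.

Lemma SB_rowsum (R : realType) (L : nat) (a : 'I_L) :
  \sum_b cabs (SB R L a b) <= 1.
Proof.
apply: (@le_trans _ _ (\sum_(b : 'I_L) 3^-1 * ((b == ordS a)%:R + (b == a)%:R + (b == ord_pred a)%:R))).
  apply: ler_sum => b _; rewrite /SB mxE.
  have h3 : (0 : R) <= 3^-1 by rewrite invr_ge0.
  case: ifP => [H|_]; last first.
    rewrite -(rmorph0 (real_complex R)) cabsR normr0.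
    by rewrite mulr_ge0 // !addr_ge0.
  have key : [|| b == ordS a, b == a | b == ord_pred a].
    case/or3P: H => /eqP h; apply/or3P.
    - by apply: Or31; apply/eqP; apply: val_inj => /=; rewrite -h addn1.
    - by apply: Or32; apply/eqP; apply: val_inj => /=; rewrite h.
    - apply: Or33; apply/eqP; rewrite -(ordSK b); congr ord_pred.
      by apply: val_inj; rewrite /= -h addn1.
  rewrite cabs_inv3 ler_peMr //.
  case: (b == ordS a) (b == a) (b == ord_pred a) key => [] [] [] //= _;
    rewrite ?mulr1n ?mulr0n ?addr0 ?add0r; lra.
rewrite -mulr_sumr !big_split /= !sum_ind.
have -> : (1 + 1 + 1 : R) = 3 by lra.
by rewrite mulVf.
Qed.


Lemma rowsum_mul (R : realType) (L : nat) (P Q : 'M[R[i]]_L) a :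
  \sum_b cabs ((P *m Q) a b) <= \sum_k cabs (P a k) * \sum_b cabs (Q k b).
Proof.
under eq_bigr do rewrite mxE.
apply: (@le_trans _ _ (\sum_b \sum_k cabs (P a k * Q k b))).
  by apply: ler_sum => b _; apply: cabs_sum.
rewrite exchange_big /=; apply: ler_sum => k _; rewrite mulr_sumr.
by apply: ler_sum => b _; rewrite cabsM.
Qed.

Definition rmax {R : realType} {L : nat} (f : 'I_L -> R) := \big[Num.max/0]_k f k.

Lemma rmax_ge (R : realType) (L : nat) (f : 'I_L -> R) k : f k <= rmax f.
Proof. exact: le_bigmax. Qed.

Lemma rmax_ge0 (R : realType) (L : nat) (f : 'I_L -> R) : 0 <= rmax f.
Proof.
rewrite /rmax; elim/big_rec: _ => //= i x _ hx.
by rewrite le_max hx orbT.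
Qed.

Arguments rmax_ge0 {R L}.
Arguments rmax_ge {R L}.
Lemma rmax_le (R : realType) (L : nat) (f : 'I_L -> R) c :
  0 <= c -> (forall k, f k <= c) -> rmax f <= c.
Proof. by move=> h0 h; apply: bigmax_le. Qed.

Lemma avg_bound (R : realType) (L : nat) (P : 'M[R[i]]_L) (f : 'I_L -> R) a :
  (forall a, \sum_b cabs (P a b) <= 1) ->
  \sum_k cabs (P a k) * f k <= rmax f.
Proof.
move=> hP.
apply: (@le_trans _ _ (\sum_k cabs (P a k) * rmax f)).
  by apply: ler_sum => k _; rewrite ler_wpM2l ?cabs_ge0 ?rmax_ge.
by rewrite -mulr_suml ler_piMl ?rmax_ge0.
Qed.

Lemma cabs_eq0 (R : realType) (z : R[i]) : cabs z = 0 -> z = 0.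
Proof. by move=> h; apply/eqP; rewrite -normr_eq0 cabsE h. Qed.

Lemma ker_triv (R : realType) (L : nat) (P : 'M[R[i]]_L) (c : R[i]) (v : 'rV[R[i]]_L) :
  (forall a, \sum_b cabs (P a b) <= 1) -> cabs c < 1 ->
  v *m (1%:M - c *: P)^T = 0 -> v = 0.
Proof.
move=> hP hc hv.
have hw : forall j, v 0 j = c * \sum_k P j k * v 0 k.
  move=> j0; have := congr1 (fun M : 'rV[R[i]]_L => M 0 j0) hv.
  rewrite !mxE /=.
  under eq_bigr do rewrite !mxE.
  rewrite (eq_bigr (fun k => v 0 k * (k == j0)%:R - c * (P j0 k * v 0 k))); last first.
    by move=> k _; rewrite eq_sym; ring.
  rewrite sumrB (bigD1 j0) //= eqxx mulr1 big1 ?addr0; last first.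
    by move=> k /negbTE ->; rewrite mulr0.
  by rewrite -mulr_sumr => /eqP; rewrite subr_eq0 => /eqP.
set f := fun k => cabs (v 0 k).
have hf : forall j, f j <= cabs c * rmax f.
  move=> j0; rewrite /f hw cabsM ler_wpM2l ?cabs_ge0 //.
  apply: le_trans; first exact: cabs_sum.
  under eq_bigr do rewrite cabsM.
  exact: avg_bound.
have hm : rmax f <= cabs c * rmax f.
  by apply: rmax_le => //; rewrite mulr_ge0 ?cabs_ge0 ?rmax_ge0.
have hm0 : rmax f = 0.
  have := rmax_ge0 f; have := @cabs_ge0 R c; nra.
apply/matrixP => i0 j; rewrite (ord1 i0) mxE.
have : f j = 0.
  by apply/eqP; rewrite eq_le cabs_ge0 andbT -hm0 rmax_ge.
by move/cabs_eq0.
Qed.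

Lemma unit_ok (R : realType) (L : nat) (P : 'M[R[i]]_L) (c : R[i]) :
  (forall a, \sum_b cabs (P a b) <= 1) -> cabs c < 1 ->
  (1%:M - c *: P) \in unitmx.
Proof.
move=> hP hc.
rewrite -unitmx_tr -row_free_unit -kermx_eq0.
apply/eqP/row_matrixP => i; rewrite row0.
have h := @ker_triv R L P c (row i (kermx (1%:M - c *: P)^T)) hP hc.
apply: h.
by apply/sub_kermxP; rewrite row_sub.
Qed.


Arguments unit_ok {R L P c}.

Lemma rowsum_aff (R : realType) (L : nat) (Q : 'M[R[i]]_L) (k : R[i]) a :
  \sum_b cabs ((1%:M + k *: Q) a b) <= 1 + cabs k * \sum_b cabs (Q a b).
Proof.
apply: (@le_trans _ _ (\sum_b (cabs ((1%:M : 'M[R[i]]_L) a b) + cabs k * cabs (Q a b)))).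
  by apply: ler_sum => b _; rewrite !mxE -cabsM cabsD.
rewrite big_split /= -mulr_sumr lerD2r.
rewrite (bigD1 a) //= big1 ?addr0; last first.
  move=> b hb; rewrite mxE eq_sym (negbTE hb) mulr0n.
  have : `|0 : R[i]| = (0 : R)%:C%C by rewrite normr0.
  by rewrite cabsE => /(@complexI R) ->.
rewrite mxE eqxx mulr1n.
have : `|1 : R[i]| = (1 : R)%:C%C by rewrite normr1.
by rewrite cabsE => /(@complexI R) ->.
Qed.

Lemma inv_eq (R : realType) (L : nat) (P : 'M[R[i]]_L) (c : R[i]) :
  (forall a, \sum_b cabs (P a b) <= 1) -> cabs c < 1 ->
  invmx (1%:M - c *: P) = 1%:M + c *: (P *m invmx (1%:M - c *: P)).
Proof.
move=> hP hc.
have := mulmxV (unit_ok hP hc).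
rewrite mulmxBl mul1mx -scalemxAl => h.
set M := invmx _ in h *.
by rewrite -h subrK.
Qed.

Lemma inv_bound (R : realType) (L : nat) (P : 'M[R[i]]_L) (c : R[i]) :
  (forall a, \sum_b cabs (P a b) <= 1) -> cabs c < 1 ->
  rmax (fun a => \sum_b cabs (invmx (1%:M - c *: P) a b)) * (1 - cabs c) <= 1.
Proof.
move=> hP hc.
set M := invmx _.
set r := rmax _.
have hr : r <= 1 + cabs c * r.
  apply: rmax_le; first by rewrite addr_ge0 // mulr_ge0 ?cabs_ge0 ?rmax_ge0.
  move=> a; rewrite /M inv_eq // -/M.
  apply: le_trans; first exact: rowsum_aff.
  rewrite lerD2l ler_wpM2l ?cabs_ge0 //.
  apply: le_trans; first exact: rowsum_mul.
  exact: avg_bound.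
lra.
Qed.

Lemma U_rowsum (R : realType) (L : nat) (P : 'M[R[i]]_L) (c s' : R[i]) a :
  (forall a, \sum_b cabs (P a b) <= 1) -> cabs c < 1 ->
  \sum_b cabs (((1%:M - s' *: P) *m invmx (1%:M - c *: P)) a b) <=
  1 + cabs (c - s') * rmax (fun a => \sum_b cabs (invmx (1%:M - c *: P) a b)).
Proof.
move=> hP hc.
have -> : (1%:M - s' *: P) *m invmx (1%:M - c *: P) =
   1%:M + (c - s') *: (P *m invmx (1%:M - c *: P)).
  rewrite mulmxBl mul1mx -scalemxAl {1}inv_eq // scalerBl.
  by rewrite addrA -[1%:M + _ - _]addrA.
apply: le_trans; first exact: rowsum_aff.
rewrite lerD2l ler_wpM2l ?cabs_ge0 //.
apply: le_trans; first exact: rowsum_mul.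
exact: avg_bound.
Qed.


Lemma E2_lt4 (R : realType) (E : R) : `|E| < 2 -> 0 < 4 - E ^+ 2.
Proof.
move=> h; rewrite -real_normK ?num_real //.
have := normr_ge0 E; nra.
Qed.

Lemma msig_abs (R : realType) (E : R) sg : `|E| < 2 -> cabs (msig E sg) = 1.
Proof.
move=> /E2_lt4 h.
have key : (- E / 2) ^+ 2 + (Num.sqrt (4 - E ^+ 2) / 2) ^+ 2 = 1.
  rewrite !expr_div_n sqr_sqrtr ?ltW // sqrrN.
  have h4 : (2 : R) ^+ 2 = 4 by rewrite expr2; lra.
  by rewrite h4; field.
case: sg; rewrite /msig /msc_bd /cabs /=.
  by rewrite key sqrtr1.
by rewrite sqrrN key sqrtr1.
Qed.

Lemma cim_pos (R : realType) (E : R) : `|E| < 2 -> 0 < cim (msc_bd E).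
Proof.
move=> /E2_lt4 h; rewrite /cim /msc_bd /=.
by rewrite divr_gt0 // sqrtr_gt0.
Qed.

Lemma Ufactor_rowsum (R : realType) (L : nat) (s t : R) (x : R[i]) a :
  cabs x = 1 -> 0 <= s -> s < t -> t < 1 ->
  \sum_b cabs (Ufactor L s t x a b) <= (1 - s) / (1 - t).
Proof.
move=> hx hs hst ht.
have hP := @SB_rowsum R L.
have hct : cabs (t%:C%C * x) = t by rewrite cabsM hx mulr1 cabsR ger0_norm //; lra.
have hc : cabs (t%:C%C * x) < 1 by rewrite hct.
rewrite /Ufactor.
apply: le_trans; first exact: (@U_rowsum R L (SB R L) _ _ a hP hc).
have hr := @inv_bound R L (SB R L) _ hP hc.
have hr0 := rmax_ge0 (fun a0 => \sum_b cabs (invmx (1%:M - (t%:C%C * x) *: SB R L) a0 b)).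
have -> : cabs (t%:C%C * x - s%:C%C * x) = t - s.
  by rewrite -mulrBl -rmorphB cabsM hx mulr1 cabsR ger0_norm //; lra.
move: hr hr0; rewrite hct.
set r := rmax _ => hr hr0.
rewrite ler_pdivlMr; last lra.
nra.
Qed.


Lemma maxnorm_ge0 (R : realType) (L n : nat) (A : {ffun 'I_n -> 'I_L} -> R[i]) :
  0 <= maxnorm A.
Proof.
rewrite /maxnorm; elim/big_rec: _ => //= i x _ hx.
by rewrite le_max hx orbT.
Qed.

Theorem lemma7p1 (R : realType) (E : R) (n : nat) (L : nat -> nat) :
  `|E| < 2 -> (2 <= n)%N ->
  forall eps : R, 0 < eps ->
  exists N0 : nat, forall N : nat, (N0 <= N)%N ->
  forall (sigma : 'I_n -> bool) (s t : R), 0 <= s -> s < t -> t < 1 ->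
  forall A : {ffun 'I_n -> 'I_(L N)} -> R[i],
    maxnorm (Uop E s t sigma A)
      <= (N%:R `^ eps) * maxnorm A * (eta_t E s / eta_t E t) ^+ n.
Proof.
move=> hE hn eps heps; exists 1%N => N hN sigma s t hs hst ht A.
have hK : eta_t E s / eta_t E t = (1 - s) / (1 - t).
  rewrite /eta_t; have := @cim_pos R E hE; set y := cim _ => hy.
  field; apply/andP; split; apply/eqP; lra.
rewrite hK; set K := (1 - s) / (1 - t).
have hK0 : 0 <= K by rewrite /K divr_ge0 //; lra.
have hN1 : 1 <= N%:R `^ eps :> R.
  rewrite -{1}(powRr0 (N%:R : R)); apply: ler_powR; last lra.
  by rewrite ler1n.
have hM0 := @maxnorm_ge0 R _ _ A.
apply: bigmax_le => [|a _].
  by rewrite !mulr_ge0 ?exprn_ge0 // powR_ge0.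
apply: (@le_trans _ _ (maxnorm A * K ^+ n)); last first.
  rewrite -mulrA ler_peMl // mulr_ge0 // exprn_ge0 //.
rewrite /Uop.
apply: le_trans; first exact: cabs_sum.
set U := fun i : 'I_n => Ufactor (L N) s t (msig E (sigma i) * msig E (sigma (ordS i))).
apply: (@le_trans _ _ (\sum_(b : {ffun 'I_n -> 'I_(L N)}) (\prod_(i < n) cabs (U i (a i) (b i))) * maxnorm A)).
  apply: ler_sum => b _; rewrite cabsM cabs_prod ler_wpM2l //.
    by apply: prodr_ge0 => i _; exact: cabs_ge0.
  exact: (le_bigmax _ (fun b => cabs (A b)) b).
rewrite -mulr_suml mulrC ler_wpM2l //.
rewrite -(bigA_distr_bigA (fun i j => cabs (U i (a i) j))) /=.
rewrite (_ : K ^+ n = \prod_(i < n) K); last by rewrite prodr_const card_ord.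
apply: ler_prod => i _; rewrite sumr_ge0 /=; last by move=> j _; exact: cabs_ge0.
apply: Ufactor_rowsum => //.
by rewrite cabsM !(@msig_abs R E) // mulr1.
Qed.
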